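(* Let $n\ge 1$ and let $\epsilon_n=e^{2\pi\sqrt{-1}/n}$. Define \[ \Psi_n(X_0,\dots,X_{n-1})=\prod_{i\in(\mathbb Z/n\mathbb Z)^\times}\Bigl(\sum_{j\in\mathbb Z/n\mathbb Z}\epsilon_n^{ij}X_j\Bigr). \] Let the symmetric group $S_n$, viewed as the permutation group of $\mathbb Z/n\mathbb Z=\{0,1,\dots,n-1\}$, act on $\mathbb C[X_0,\dots,X_{n-1}]$ by $\sigma(X_j)=X_{\sigma(j)}$, and let $\mathrm{Stab}(\Psi_n)=\{\sigma\in S_n:\sigma(\Psi_n)=\Psi_n\}$. Then $\mathrm{Stab}(\Psi_n)=\{\mathrm{id}\}$ if $n=1,2$, and $\mathrm{Stab}(\Psi_n)=G_n$ if $n>2$, where $G_n=\{\alpha_{a,b}: a\in(\mathbb Z/n\mathbb Z)^\times,\ b\in\mathbb Z/n\mathbb Z\}$ and $\alpha_{a,b}$ is the permutation $x\mapsto ax+b$ of $\mathbb Z/n\mathbb Z$.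
   Context: $G_n$ is the affine group $\mathrm{AGL}(1,\mathbb Z/n\mathbb Z)$ viewed as a subgroup of $S_n$. *)

(* Defs.v *)
From HB Require Import structures.
From mathcomp Require Import all_boot all_order all_algebra all_fingroup all_field.
From mathcomp Require Import mpoly.
Set Implicit Arguments. Unset Strict Implicit. Unset Printing Implicit Defensive.
Import GRing.Theory Num.Theory.
Local Open Scope ring_scope.

(* eps_n = exp(2*pi*sqrt(-1)/n): n.-root (-1) is the n-th root of -1 with
   minimal non-negative argument, i.e. exp(i*pi/n); its square is exp(2 i pi/n).
   (For n = 1: 1.-root(-1) = -1, square = 1.) *)
Definition eps (n : nat) : algC := (n.-root (-1)) ^+ 2.

(* Z/nZ is represented by 'I_n (n >= 1), with arithmetic mod n;
   the units of Z/nZ are the i with coprime i n (for n = 1, i = 0). *)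
Definition Psi (n : nat) : {mpoly algC[n]} :=
  \prod_(i : 'I_n | coprime i n) \sum_(j : 'I_n) (eps n ^+ (i * j)%N) *: 'X_j.

(* Stabilizer of Psi_n under sigma(X_j) = X_(sigma j) (this is mpoly's msym). *)
Definition StabPsi (n : nat) : {set 'S_n} :=
  [set s : 'S_n | msym s (Psi n) == Psi n].

Definition Gaff (n : nat) : {set 'S_n} :=
  [set s : 'S_n | [exists a : 'I_n, exists b : 'I_n,
     coprime a n && [forall x : 'I_n, nat_of_ord (s x) == (a * x + b) %% n]%N]].

(* Main.v *)
Set Warnings "-notation-overridden -ambiguous-paths -notation-incompatible-prefix".
Require Import Defs.
From HB Require Import structures.
From mathcomp Require Import all_boot all_order all_algebra all_fingroup all_field.
From mathcomp Require Import mpoly.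
From mathcomp Require Import ring zify.
Set Implicit Arguments. Unset Strict Implicit. Unset Printing Implicit Defensive.
Import Order.TTheory GRing.Theory Num.Theory.
Local Open Scope ring_scope.
Definition Rp (y : algC) := (y + y^-1) / 2.
Lemma I1 (x u : algC) : x != 0 -> u != 0 -> Rp (x*u) + Rp (x*u^-1) = 2 * Rp x * Rp u.
Proof. move=> hx hu; rewrite /Rp. field. by rewrite ?hx ?hu /=. Qed.
Lemma I2 (x u : algC) : x != 0 -> u != 0 -> (Rp x - Rp (x*u)) * (Rp x - Rp (x*u^-1)) = (1 - Rp u) * (2 * Rp x ^+2 - 1 - Rp u).
Proof. move=> hx hu; rewrite /Rp. field. by rewrite ?hx ?hu /=. Qed.
Lemma I3 (x : algC) : x != 0 -> Rp (x ^+ 2) = 2 * Rp x ^+ 2 - 1.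
Proof. move=> hx; rewrite /Rp. rewrite -exprVn. field. by rewrite ?hx /=. Qed.

Lemma norm1_inv (y : algC) : `|y| = 1 -> y^-1 = y^*.
Proof. by move=> h; rewrite invC_norm h expr1n invr1 mul1r. Qed.
Lemma norm1_neq0 (y : algC) : `|y| = 1 -> y != 0.
Proof. by move=> h; rewrite -normr_eq0 h oner_neq0. Qed.
Lemma Rp_Re y : `|y| = 1 -> Rp y = 'Re y.
Proof. by move=> h; rewrite ReE /Rp norm1_inv. Qed.
Lemma Rp_real y : `|y| = 1 -> Rp y \is Num.real.
Proof. by move=> h; rewrite Rp_Re // Creal_Re. Qed.
Lemma norm_pow_N1 n (y : algC) : (0 < n)%N -> y ^+ n = -1 -> `|y| = 1.
Proof.
move=> n0 h; apply/eqP; rewrite -(pexpr_eq1 n0) ?normr_ge0 //.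
by rewrite -normrX h normrN1.
Qed.
Lemma one_sub_Rp u : `|u| = 1 -> 1 - Rp u = `|u - 1| ^+ 2 / 2.
Proof.
move=> h; have u0 := norm1_neq0 h.
rewrite normCK rmorphB /= conjC1 -norm1_inv // /Rp. by field.
Qed.
Lemma one_add_Rp u : `|u| = 1 -> 1 + Rp u = `|u + 1| ^+ 2 / 2.
Proof.
move=> h; have u0 := norm1_neq0 h.
rewrite normCK rmorphD /= conjC1 -norm1_inv // /Rp. by field.
Qed.
Lemma one_sub_Rp_gt0 u : `|u| = 1 -> u != 1 -> 0 < 1 - Rp u.
Proof.
move=> h hu; rewrite one_sub_Rp // divr_gt0 // exprn_gt0 // normr_gt0 subr_eq0 //.
Qed.
Lemma Rp_eq y z : `|y| = 1 -> `|z| = 1 -> Rp y = Rp z -> y = z \/ y = z^-1.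
Proof.
move=> hy hz e; have y0 := norm1_neq0 hy; have z0 := norm1_neq0 hz.
have e2 : z + z^-1 = y + y^-1.
  have := congr1 (fun t => t * 2) e; rewrite /Rp /= !divfK ?pnatr_eq0 //.
have : (y - z) * (y - z^-1) = 0.
  have -> : (y - z) * (y - z^-1) = y ^+ 2 + z * z^-1 - y * (z + z^-1) by ring.
  by rewrite e2 mulfV //; field.
by move/eqP; rewrite mulf_eq0 !subr_eq0 => /orP [/eqP -> | /eqP ->]; [left|right].
Qed.

Lemma local_opt x w : `|x| = 1 -> `|w| = 1 -> w != 1 ->
  Rp (x * w) <= Rp x -> Rp (x * w^-1) <= Rp x -> 0 <= Rp x /\ Rp w <= Rp (x ^+ 2).
Proof.
move=> hx hw w1 h1 h2; have x0 := norm1_neq0 hx; have w0 := norm1_neq0 hw.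
have pw := one_sub_Rp_gt0 hw w1.
split.
  have := Num.Theory.lerD h1 h2; rewrite I1 // -subr_ge0.
  have -> : Rp x + Rp x - 2 * Rp x * Rp w = (2 * Rp x) * (1 - Rp w) by ring.
  by rewrite pmulr_lge0 // pmulr_rge0.
have := mulr_ge0 (ltac:(by rewrite subr_ge0) : 0 <= Rp x - Rp (x * w)) (ltac:(by rewrite subr_ge0) : 0 <= Rp x - Rp (x * w^-1)); rewrite I2 // pmulr_rge0 //.
by rewrite I3 // subr_ge0.
Qed.

Lemma exists_max (f : algC -> algC) (s : seq algC) :
  {in s, forall x, f x \is Num.real} -> s != [::] ->
  exists2 x, x \in s & {in s, forall y, f y <= f x}.
Proof.
elim: s => [//|a s IH] hr _.
case: s IH hr => [|b s] IH hr.
  exists a; first by rewrite mem_head.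
  by move=> y; rewrite inE => /eqP ->.
have [x xs xm] : exists2 x, x \in b :: s & {in b :: s, forall y, f y <= f x}.
  by apply: IH => // y ys; apply: hr; rewrite inE ys orbT.
have ra := hr a (mem_head _ _).
have rx : f x \is Num.real by apply: hr; rewrite inE xs orbT.
case: (real_leP ra rx) => h.
  exists x; first by rewrite inE xs orbT.
  by move=> y; rewrite inE => /predU1P [-> // | ys]; exact: xm.
exists a; first by rewrite mem_head.
move=> y; rewrite inE => /predU1P [-> // | ys].
exact: le_trans (xm y ys) (ltW h).
Qed.

Lemma N1_neq1 : (-1 : algC) != 1.
Proof. by rewrite lt_eqF // (lt_trans (ltrN10 _) ltr01). Qed.

Lemma rootN1_prim n : (0 < n)%N -> (2 * n).-primitive_root (n.-root (-1 : algC)).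
Proof.
move=> n0; set z := n.-root (-1 : algC).
have zn : z ^+ n = -1 by rewrite /z rootCK.
have z1 : `|z| = 1 := norm_pow_N1 n0 zn.
have z0 := norm1_neq0 z1.
have z2n : z ^+ (2 * n)%N = 1 by rewrite mulnC exprM zn expr2 mulrNN mulr1.
have zmax : forall y, y ^+ n = -1 -> Rp y <= Rp z.
  move=> y yn; rewrite !Rp_Re ?(norm_pow_N1 n0 yn) //.
  case: (real_leP (real0 _) (Creal_Im y)) => hI.
    exact: rootC_Re_max n0 yn hI.
  rewrite -Re_conj; apply: rootC_Re_max n0 _ _.
    by rewrite -rmorphXn yn rmorphN1.
  by rewrite Im_conj oppr_ge0 ltW.
apply/negPn/negP => nprim.
have [zeta pz] := C_prim_root_exists n0.
have n20 : (0 < 2 * n)%N by rewrite muln_gt0.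
have [k pk kdvd] := prim_order_exists n20 z2n.
pose inW y := has (fun j => y == z ^+ (2 * j + 1)%N) (iota 0 n).
have inWP : forall j, inW (z ^+ (2 * j + 1)%N).
  move=> j; apply/hasP; exists (j %% n)%N; first by rewrite mem_iota ltn_mod n0.
  apply/eqP; rewrite [in LHS](divn_eq j n).
  have -> : (2 * (j %/ n * n + j %% n) + 1 = (2*n) * (j %/ n) + (2 * (j %% n) + 1))%N by ring.
  by rewrite exprD exprM z2n expr1n mul1r.
have yinS : forall y, y ^+ n = -1 -> y \in [seq z * zeta ^+ i | i <- iota 0 n].
  move=> y yn; have : (y / z) ^+ n = 1.
    by rewrite expr_div_n yn zn divff // oppr_eq0 oner_neq0.
  case/(prim_rootP pz) => i hi; apply/mapP; exists (val i).
    by rewrite mem_iota ltn_ord.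
  by rewrite -hi mulrC divfK.
have sinS : forall y, y \in [seq z * zeta ^+ i | i <- iota 0 n] -> y ^+ n = -1.
  move=> y /mapP [i _ ->].
  by rewrite exprMn zn -exprM mulnC exprM (prim_expr_order pz) expr1n mulr1.
have zzeta : ~~ inW (z * zeta).
  apply/hasP => [[j _ /eqP e]].
  have ez : zeta = z ^+ (2 * j)%N.
    by apply: (mulfI z0); rewrite e -exprS addn1.
  have nk : (n %| k)%N.
    by rewrite (prim_order_dvd pz) ez -exprM mulnC exprM (prim_expr_order pk) expr1n.
  have kn : ~~ (k %| n)%N by rewrite (prim_order_dvd pk) zn N1_neq1.
  case/dvdnP: nk => t kt; rewrite kt in pk kdvd kn.
  rewrite dvdn_pmul2r // in kdvd.
  have := dvdn_leq (isT : (0 < 2)%N) kdvd.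
  case: t kdvd pk kn {kt} => [|[|[|t]]] //= _ pk kn _.
    by rewrite mul1n dvdnn in kn.
  by rewrite pk in nprim.
pose A := [seq y <- [seq z * zeta ^+ i | i <- iota 0 n] | ~~ inW y].
have Aclos : forall w, w ^+ n = -1 -> ~~ inW w -> w \in A.
  by move=> w wn wW; rewrite mem_filter wW yinS.
have zzA : z * zeta \in A.
  by apply: Aclos => //; rewrite exprMn zn (prim_expr_order pz) mulr1.
have [y yA ymax] : exists2 y, y \in A & {in A, forall y', Rp y' <= Rp y}.
  apply: exists_max.
    move=> w; rewrite mem_filter => /andP [_ /sinS wn].
    exact: Rp_real (norm_pow_N1 n0 wn).
  by apply/eqP => eA; rewrite eA in zzA.
move: yA; rewrite mem_filter => /andP [ynW yS].
have yn := sinS y yS; have y1 := norm_pow_N1 n0 yn.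
have zinv2 : (z ^+ 2)^-1 = z ^+ (2 * n - 2)%N.
  apply: (mulfI (expf_neq0 2 z0)); rewrite mulfV ?expf_neq0 // -exprD.
  by have -> : (2 + (2 * n - 2) = 2 * n)%N by lia.
have z21n : `|z ^+ 2| = 1 by rewrite normrX z1 expr1n.
have h1 : Rp (y * z ^+ 2) <= Rp y.
  apply: ymax; apply: Aclos.
    by rewrite exprMn yn -exprM z2n mulr1.
  apply/negP => /hasP [j _ /eqP e]; move/negP: ynW; apply.
  have -> : y = z ^+ (2 * (j + n - 1) + 1)%N.
    have -> : y = y * z ^+ 2 * (z ^+ 2)^-1 by rewrite mulfK // expf_neq0.
    rewrite e zinv2 -exprD.
    by have -> : (2 * j + 1 + (2 * n - 2) = 2 * (j + n - 1) + 1)%N by lia.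
  exact: inWP.
have h2 : Rp (y * (z ^+ 2)^-1) <= Rp y.
  apply: ymax; apply: Aclos.
    by rewrite exprMn yn exprVn -exprM z2n invr1 mulr1.
  apply/negP => /hasP [j _ /eqP e]; move/negP: ynW; apply.
  have -> : y = z ^+ (2 * (j + 1) + 1)%N.
    have -> : y = y * (z ^+ 2)^-1 * z ^+ 2 by rewrite mulfVK // expf_neq0.
    rewrite e -exprD.
    by have -> : (2 * j + 1 + 2 = 2 * (j + 1) + 1)%N by lia.
  exact: inWP.
have Rpzy : Rp z <= Rp y.
  case: (eqVneq (z ^+ 2) 1) => [z21 | z21].
    have zm1 : z = -1.
      have : (z - 1) * (z + 1) == 0 by rewrite -subr_sqr z21 expr1n subrr.
      rewrite mulf_eq0 subr_eq0 => /orP [/eqP z1e|]; last by rewrite addr_eq0 => /eqP.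
      by move: zn; rewrite z1e expr1n => /eqP; rewrite eq_sym (negPf N1_neq1).
    have hy : 0 <= 1 + Rp y by rewrite one_add_Rp // divr_ge0 // exprn_ge0.
    have -> : Rp z = -1 by rewrite zm1 /Rp invrN1; field.
    by rewrite -subr_ge0 opprK addrC.
  have [Ry0 Ryz] := local_opt y1 z21n z21 h1 h2.
  rewrite (I3 z0) (I3 (norm1_neq0 y1)) in Ryz.
  have Rz : Rp z ^+ 2 <= Rp y ^+ 2.
    by move: Ryz; rewrite lerD2r ler_pM2l.
  case: (real_leP (Rp_real z1) (Rp_real y1)) => // hlt.
  have Rz0 : 0 <= Rp z := le_trans Ry0 (ltW hlt).
  by move: Rz; rewrite ler_pXn2r ?nnegrE // => /(lt_le_trans hlt); rewrite ltxx.
have Req : Rp y = Rp z by apply/le_anti; rewrite zmax // Rpzy.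
case: (Rp_eq y1 z1 Req) => ey; move/negP: ynW; apply; rewrite ey.
  by have := inWP 0%N; rewrite muln0 add0n expr1.
have -> : z^-1 = z ^+ (2 * (n - 1) + 1)%N.
  apply: (mulfI z0); rewrite mulfV // -exprS.
  by have -> : (2 * (n - 1) + 1).+1 = (2 * n)%N by lia.
exact: inWP.
Qed.

Lemma eps_prim n : (0 < n)%N -> n.-primitive_root (n.-root (-1 : algC) ^+ 2).
Proof.
move=> n0; have := dvdn_prim_root (rootN1_prim n0) (dvdn_mull 2 (dvdnn n)).
by rewrite mulnK.
Qed.
Lemma exists_notin (s : seq algC) : exists t, t \notin s.
Proof.
pose sq := [seq i%:R | i <- iota 0 (size s).+1] : seq algC.
have usq : uniq sq.
  rewrite map_inj_uniq ?iota_uniq // => x y /eqP; rewrite eqr_nat => /eqP //.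
case: (boolP (all (mem s) sq)) => [/allP hall | /allPn [t _ ht]].
  by have := uniq_leq_size usq hall; rewrite size_map size_iota ltnn.
by exists t.
Qed.

Lemma aux_nz (al be t : algC) : (al != 0) || (be != 0) -> t != - al / be -> al + t * be != 0.
Proof.
case: (eqVneq be 0) => [-> | hb].
  by rewrite orbF mulr0 addr0.
move=> _ ht; apply/eqP => h; move/eqP: ht; apply.
apply: (mulIf hb); rewrite mulfVK //.
by move/eqP: h; rewrite addrC addr_eq0 => /eqP.
Qed.

Lemma lin_sum m (x v w : 'I_m -> algC) (t : algC) :
  \sum_k x k * (v k + t * w k) = \sum_k x k * v k + t * \sum_k x k * w k.
Proof.
rewrite mulr_sumr -big_split /=; apply: eq_bigr => k _; ring.
Qed.

Lemma combine m (a : 'I_m -> algC) (I : eqType) (c : I -> 'I_m -> algC) (r : seq I) :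
  (forall i, i \in r -> exists w : 'I_m -> algC,
      \sum_k a k * w k = 0 /\ \sum_k c i k * w k != 0) ->
  exists v : 'I_m -> algC, \sum_k a k * v k = 0 /\
      forall i, i \in r -> \sum_k c i k * v k != 0.
Proof.
elim: r => [|i r IH] H.
  by exists (fun _ => 0); split => //; rewrite big1 // => k _; rewrite mulr0.
have [v [va vc]] : exists v : 'I_m -> algC, \sum_k a k * v k = 0 /\ forall j, j \in r -> \sum_k c j k * v k != 0.
  by apply: IH => j jr; apply: H; rewrite inE jr orbT.
have [w [wa wc]] := H i (mem_head _ _).
have [t ht] := exists_notin
   [seq - (\sum_k c j k * v k) / (\sum_k c j k * w k) | j <- i :: r].
exists (fun k => v k + t * w k); split.
  by rewrite lin_sum va wa mulr0 addr0.
move=> j jr; rewrite lin_sum; apply: aux_nz.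
  move: jr; rewrite inE => /predU1P [-> | jr]; first by rewrite wc orbT.
  by rewrite vc.
apply: contra ht => /eqP ->; apply/mapP; exists j => //.
Qed.

Lemma sum_delta m (F : 'I_m -> algC) k x :
  \sum_j F j * ((j == k)%:R * x) = F k * x.
Proof.
rewrite (bigD1 k) //= eqxx mul1r big1 ?addr0 // => j /negbTE ->.
by rewrite mul0r mulr0.
Qed.

Lemma kernel_prop m (a : 'I_m -> algC) (k0 : 'I_m) (I : finType) (P : pred I)
    (c : I -> 'I_m -> algC) :
  a k0 != 0 ->
  (forall v : 'I_m -> algC, \sum_k a k * v k = 0 ->
      \prod_(i | P i) \sum_k c i k * v k = 0) ->
  exists2 i, P i & forall k, c i k * a k0 = a k * c i k0.
Proof.
move=> a0 H.
case: (boolP [exists i, P i && [forall k, c i k * a k0 == a k * c i k0]]).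
  by case/existsP => i /andP [Pi /forallP h]; exists i => // k; exact/eqP.
rewrite negb_exists => /forallP hn.
have hw : forall i, i \in [seq i <- index_enum I | P i] -> exists w : 'I_m -> algC,
      \sum_k a k * w k = 0 /\ \sum_k c i k * w k != 0.
  move=> i; rewrite mem_filter => /andP [Pi _].
  move: (hn i); rewrite Pi /= negb_forall => /existsP [k hk].
  exists (fun j => (j == k)%:R * a k0 - (j == k0)%:R * a k); split.
    rewrite (eq_bigr (fun j => a j * ((j == k)%:R * a k0) - a j * ((j == k0)%:R * a k)));
      last by move=> j _; rewrite mulrBr.
    by rewrite sumrB !sum_delta mulrC subrr.
  rewrite (eq_bigr (fun j => c i j * ((j == k)%:R * a k0) - c i j * ((j == k0)%:R * a k)));
    last by move=> j _; rewrite mulrBr.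
  by rewrite sumrB !sum_delta subr_eq0 [c i k0 * _]mulrC.
have [v [va vc]] := combine hw.
have hne : \prod_(i | P i) \sum_k c i k * v k != 0.
  by apply/prodf_neq0 => i Pi; apply: vc; rewrite mem_filter Pi mem_index_enum.
by rewrite (H v va) eqxx in hne.
Qed.

Definition Lf n (f : 'I_n -> 'I_n) : {mpoly algC[n]} :=
  \prod_(i : 'I_n | coprime i n) \sum_(j : 'I_n) (eps n ^+ (i * j)%N) *: 'X_(f j).
Arguments Lf : clear implicits.

Lemma Psi_Lf n : Psi n = Lf n id. Proof. by []. Qed.

Lemma msymXU n (s : 'S_n) (i : 'I_n) : msym s ('X_i : {mpoly algC[n]}) = 'X_(s i).
Proof. by rewrite /msym mmapX mmap1U. Qed.

Lemma msym_Psi n (s : 'S_n) : msym s (Psi n) = Lf n s.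
Proof.
rewrite /Psi rmorph_prod; apply: eq_bigr => i _.
rewrite raddf_sum; apply: eq_bigr => j _ /=.
by rewrite msymZ msymXU.
Qed.

Lemma meval_Lf n (v : 'I_n -> algC) f :
  meval v (Lf n f) = \prod_(i : 'I_n | coprime i n) \sum_(j : 'I_n) eps n ^+ (i * j)%N * v (f j).
Proof.
rewrite /Lf rmorph_prod; apply: eq_bigr => i _; rewrite raddf_sum; apply: eq_bigr => j _.
by rewrite /= mevalZ mevalXU.
Qed.

Lemma eps_neq0 n : (0 < n)%N -> eps n != 0.
Proof.
move=> n0; apply/negP => /eqP e; have := prim_expr_order (eps_prim n0).
rewrite -/(eps n) e expr0n eqn0Ngt n0 /= => /eqP; by rewrite eq_sym oner_eq0.
Qed.

Lemma stab_sub n (s : 'S_n) : (1 < n)%N -> msym s (Psi n) = Psi n -> s \in Gaff n.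
Proof.
move=> n1 hs; have n0 : (0 < n)%N by apply: ltnW.
have pe : n.-primitive_root (eps n) := eps_prim n0.
have e0 := eps_neq0 n0.
have hs' : msym (s^-1)%g (Psi n) = Psi n.
  by rewrite -{1}hs -msymMm mulgV msym1m.
have key : forall v : 'I_n -> algC, meval v (Lf n (s^-1)%g) = meval v (Lf n id).
  by move=> v; rewrite -msym_Psi hs'.
pose a := fun k : 'I_n => eps n ^+ (s k).
pose c := fun (i k : 'I_n) => eps n ^+ (i * k)%N.
pose k0 : 'I_n := Ordinal n0.
pose i1 : 'I_n := Ordinal n1.
have hker : forall v : 'I_n -> algC, \sum_k a k * v k = 0 ->
      \prod_(i : 'I_n | coprime i n) \sum_k c i k * v k = 0.
  move=> v hv; have := key v; rewrite !meval_Lf => <-.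
  rewrite (bigD1 i1) ?coprime1n //=.
  have -> : \sum_(j : 'I_n) eps n ^+ (1 * j)%N * v ((s^-1)%g j) = 0.
    rewrite (reindex_inj (@perm_inj _ s)) /= -[RHS]hv; apply: eq_bigr => k _.
    by rewrite mul1n permK.
  by rewrite mul0r.
have [i Pi hi] := @kernel_prop n a k0 'I_n (fun i : 'I_n => coprime i n) c (expf_neq0 _ e0) hker.
rewrite inE; apply/existsP; exists i; apply/existsP; exists (s k0); rewrite Pi /=.
apply/forallP => x; have := hi x; rewrite /c /a /= muln0 expr0 mulr1 -exprD.
move/eqP; rewrite (eq_prim_root_expr pe) => /eqP h.
by rewrite h modn_small.
Qed.

Lemma coprime_subn j n : (j <= n)%N -> coprime (n - j) n = coprime j n.
Proof.
move=> h; rewrite /coprime.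
have -> : gcdn (n - j) n = gcdn (n - j) j by rewrite -{2}(subnK h) gcdnDl.
by rewrite -{2}(subnK h) gcdnDr gcdnC.
Qed.

Lemma half_not_unit (j n : nat) : (2 < n)%N -> coprime j n -> (2 * j != n)%N.
Proof.
move=> n2 cj; apply/eqP => e; move: cj n2; rewrite -e /coprime [X in gcdn _ X]mulnC gcdnMr => /eqP ->.
by [].
Qed.

Lemma prod_units n : (2 < n)%N -> \prod_(i : 'I_n | coprime i n) eps n ^+ i = 1.
Proof.
move=> n2; have n0 : (0 < n)%N by apply: ltn_trans n2.
have pe : n.-primitive_root (eps n) := eps_prim n0.
have c0 : coprime 0 n = false by rewrite /coprime gcd0n gtn_eqF // ltnW.
pose f (i : 'I_n) : 'I_n := Ordinal (ltn_pmod (n - i) n0).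
have fK : involutive f.
  move=> i; apply: val_inj => /=; case: (posnP i) => [-> | ip].
    by rewrite subn0 modnn subn0 modnn.
  rewrite (@modn_small (n - i)) ?ltn_subrL ?ip ?n0 //.
  by rewrite subKn ?modn_small // ltnW.
rewrite (bigID (fun i : 'I_n => (2 * i < n)%N)) /=.
rewrite [X in _ * X](reindex_inj (inv_inj fK)) /=.
rewrite [X in _ * X](eq_bigl (fun i : 'I_n => coprime i n && (2 * i < n)%N)); last first.
  move=> j /=; case: (posnP j) => [j0 | jp].
    by rewrite j0 subn0 modnn c0.
  have hj : (n - j < n)%N by rewrite ltn_subrL jp n0.
  rewrite (modn_small hj) (coprime_subn (ltnW (ltn_ord j))).
  case cj : (coprime j n) => //=.
  have hne : (2 * j != n)%N := half_not_unit n2 cj.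
  rewrite -leqNgt; apply/idP/idP => h; lia.
rewrite -big_split /=; apply: big1 => j /andP [cj _].
have jp : (0 < j)%N by case: (posnP j) cj => // ->; rewrite c0.
have hj : (n - j < n)%N by rewrite ltn_subrL jp n0.
rewrite -exprD (modn_small hj) subnKC ?(ltnW (ltn_ord j)) //.
exact: prim_expr_order pe.
Qed.

Lemma gaff_sub n (s : 'S_n) : (2 < n)%N -> s \in Gaff n -> msym s (Psi n) = Psi n.
Proof.
move=> n2; rewrite inE => /existsP [a /existsP [b /andP [ca /forallP hs]]].
have n0 : (0 < n)%N by apply: ltn_trans n2.
have n1 : (1 < n)%N by apply: ltn_trans n2.
have pe : n.-primitive_root (eps n) := eps_prim n0.
have a0 : (0 < a)%N.
  case: (posnP a) ca => // ->; rewrite /coprime gcd0n => /eqP n1e.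
  by rewrite n1e in n1.
case: (egcdnP n a0) => u kn hk _.
have hua : (u * a %% n = 1)%N.
  by rewrite hk (eqP ca) modnMDl modn_small.
have u0 : (0 < u)%N by case: (posnP u) hua => // ->; rewrite mul0n mod0n.
pose tau (i : 'I_n) : 'I_n := Ordinal (ltn_pmod (i * u) n0).
have tauinj : injective tau.
  move=> i j /(congr1 val) /= h; apply: val_inj.
  rewrite /= -(modn_small (ltn_ord i)) -(modn_small (ltn_ord j)).
  have : (i * u * a %% n = j * u * a %% n)%N by rewrite -modnMml h modnMml.
  have e1 : forall x, (x * (u * a) %% n = x %% n)%N.
    by move=> x; rewrite -modnMmr hua muln1.
  by rewrite -!mulnA !e1.
have cu : coprime u n by apply: modn_coprime => //; exists a.
have ctau : forall i, coprime (tau i) n = coprime i n.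
  by move=> i; rewrite /= coprime_modl coprimeMl cu andbT.
have emodl : forall x y, eps n ^+ (x %% n * y)%N = eps n ^+ (x * y)%N.
  by move=> x y; rewrite !exprM (prim_expr_mod pe).
have emodr : forall x y, eps n ^+ (x * (y %% n))%N = eps n ^+ (x * y)%N.
  by move=> x y; rewrite mulnC emodl mulnC.
have hexp : forall i j : 'I_n,
    eps n ^+ (tau i * s j)%N = eps n ^+ (tau i * b)%N * eps n ^+ (i * j)%N.
  move=> i j; rewrite (eqP (hs j)) /= emodl emodr emodl.
  have -> : (i * u * (a * j + b) = i * u * b + i * j * (u * a))%N by ring.
  by rewrite exprD -(emodr (i * j)%N (u * a)%N) hua muln1.
have hL : forall i : 'I_n, \sum_(k : 'I_n) eps n ^+ (tau i * k)%N *: ('X_k : {mpoly algC[n]})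
    = eps n ^+ (tau i * b)%N *: \sum_(j : 'I_n) eps n ^+ (i * j)%N *: 'X_(s j).
  move=> i; rewrite (reindex_inj (@perm_inj _ s)) scaler_sumr; apply: eq_bigr => j _.
  by rewrite hexp scalerA.
have hprod : \prod_(i : 'I_n | coprime i n) eps n ^+ (tau i * b)%N = 1.
  under eq_bigr do rewrite exprM.
  rewrite prodrXl.
  have -> : \prod_(i : 'I_n | coprime i n) eps n ^+ (tau i) =
            \prod_(i : 'I_n | coprime i n) eps n ^+ i.
    by rewrite [RHS](reindex_inj tauinj) /=; apply: eq_bigl => i; rewrite ctau.
  by rewrite prod_units // expr1n.
rewrite msym_Psi; symmetry.
rewrite /Psi (reindex_inj tauinj) /= (eq_bigl _ _ ctau).
rewrite (eq_bigr _ (fun i _ => hL i)) scaler_prod hprod scale1r.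
by [].
Qed.

Lemma I2_cases (x : 'I_2) : x = ord0 \/ x = ord_max.
Proof. by case: x => [[|[|//]]] p; [left|right]; apply: val_inj. Qed.

Lemma P2 (F : 'I_2 -> algC) : \prod_(i : 'I_2 | coprime i 2) F i = F ord_max.
Proof.
rewrite big_mkcond !big_ord_recl big_ord0 /= mul1r mulr1.
by congr F; apply: val_inj.
Qed.

Lemma S2 (F : 'I_2 -> algC) : \sum_(i : 'I_2) F i = F ord0 + F ord_max.
Proof.
rewrite !big_ord_recl big_ord0 /= addr0.
by congr (_ + F _); apply: val_inj.
Qed.

Lemma stab_two (s : 'S_2) : msym s (Psi 2) = Psi 2 -> s = 1%g.
Proof.
move=> hs.
have pe : 2.-primitive_root (eps 2) := @eps_prim 2 isT.
pose v := fun j : 'I_2 => (j == ord0)%:R : algC.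
have := congr1 (meval v) hs; rewrite msym_Psi Psi_Lf !meval_Lf !P2 !S2 /=.
rewrite /v eqxx /= muln0 expr0 !mul1r mulr0 addr0 muln1.
have om : (ord_max : 'I_2) != ord0 by [].
case: (I2_cases (s ord0)) => h0.
  move=> _; apply/permP => i; rewrite perm1.
  case: (I2_cases i) => ->; first by [].
  case: (I2_cases (s ord_max)) => // h1.
  by have /(congr1 val) := perm_inj (etrans h1 (esym h0)).
have h1 : s ord_max = ord0.
  case: (I2_cases (s ord_max)) => // h1.
  by have /(congr1 val) := perm_inj (etrans h1 (esym h0)).
rewrite h0 h1 eqxx (negPf om) add0r mulr1 expr1 => /eqP.
by rewrite -(expr1 (eps 2)) -(prim_order_dvd pe).
Qed.

Theorem lemma2p1 (n : nat) (hn : (1 <= n)%N) :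
  StabPsi n = (if (n <= 2)%N then [set 1%g] else Gaff n).
Proof.
apply/setP => s; rewrite inE; case: ifP => hn2.
  rewrite inE; apply/eqP/eqP => [hs | ->]; last by rewrite msym1m.
  have : n = 1%N \/ n = 2%N by lia.
  case=> en; subst n.
    by apply/permP => i; rewrite perm1 !ord1.
  exact: stab_two.
have n2 : (2 < n)%N by rewrite ltnNge hn2.
apply/eqP/idP => [hs | hg].
  by apply: stab_sub => //; apply: ltn_trans n2.
exact: gaff_sub.
Qed.
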